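(* Let $\Pi$ be a set of policies and $\Theta^T$ a finite set of environment parameterizations, and for each $\vec\theta\in\Theta^T$ and $\pi\in\Pi$ let $U^{\vec\theta}(\pi)\in\mathbb{R}$ be the utility of $\pi$ in the environment parameterized by $\vec\theta$; assume that for each $\vec\theta$ the maximum $\max_{\pi'\in\Pi}U^{\vec\theta}(\pi')$ is attained and that the set $\textsc{MinimaxRegret}$ defined below is nonempty. Let real numbers $\mathbf{F}_{min}\le\mathbf{F}_{max}<\mathbf{S}_{min}\le\mathbf{S}_{max}$ satisfy $\mathbf{S}_{max}-\mathbf{S}_{min}<\mathbf{S}_{min}-\mathbf{F}_{max}$ and $\mathbf{F}_{max}-\mathbf{F}_{min}<\mathbf{S}_{min}-\mathbf{F}_{max}$, and suppose that every achievable utility satisfies $U^{\vec\theta}(\pi)\in[\mathbf{F}_{min},\mathbf{F}_{max}]\cup[\mathbf{S}_{min},\mathbf{S}_{max}]$ for all $\pi\in\Pi$, $\vec\theta\in\Theta^T$. Say $\pi$ succeeds on $\vec\theta$ if $U^{\vec\theta}(\pi)\in[\mathbf{S}_{min},\mathbf{S}_{max}]$. Suppose there exists $\pi^*\in\Pi$ such that for every $\vec\theta\in\Theta^T$, if some policy in $\Pi$ succeeds on $\vec\theta$ then $\pi^*$ succeeds on $\vec\theta$. Then every $\pi\in\textsc{MinimaxRegret}$ has the same property: for every $\vec\theta\in\Theta^T$, if some policy in $\Pi$ succeeds on $\vec\theta$, then $\pi$ succeeds on $\vec\theta$.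
   Context: Regret of a policy $\pi$ on parameterization $\vec\theta$: $\textsc{Regret}(\pi,\vec\theta)=\max_{\pi^B\in\Pi}\{U^{\vec\theta}(\pi^B)-U^{\vec\theta}(\pi)\}$. The set of minimax regret policies is $\textsc{MinimaxRegret}=\arg\min_{\pi\in\Pi}\max_{\vec\theta\in\Theta^T}\textsc{Regret}(\pi,\vec\theta)$. (In the paper, $\vec\theta$ ranges over sequences of free parameters of an underspecified POMDP, and $U^{\vec\theta}(\pi)$ is the expected discounted return of $\pi$ in the POMDP obtained by fixing those parameters.) *)

(* Defs.v *)
From Stdlib Require Import Reals List.
Open Scope R_scope.

Definition IsMax (P : R -> Prop) (v : R) : Prop :=
  P v /\ forall w, P w -> w <= v.

Definition RegretIs {Pol Th : Type} (U : Th -> Pol -> R) (pi : Pol) (th : Th) (r : R) : Prop :=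
  IsMax (fun w => exists piB : Pol, w = U th piB - U th pi) r.

Definition MaxRegretIs {Pol Th : Type} (U : Th -> Pol -> R) (pi : Pol) (m : R) : Prop :=
  IsMax (fun w => exists th : Th, exists r, RegretIs U pi th r /\ w = r) m.

Definition MinimaxRegret {Pol Th : Type} (U : Th -> Pol -> R) (pi : Pol) : Prop :=
  exists m, MaxRegretIs U pi m /\
    forall pi' m', MaxRegretIs U pi' m' -> m <= m'.

Definition succeeds {Pol Th : Type} (U : Th -> Pol -> R) (Smin Smax : R) (pi : Pol) (th : Th) : Prop :=
  Smin <= U th pi <= Smax.

(* Main.v *)
Require Import Defs.
From Stdlib Require Import Reals List Lra.
Open Scope R_scope.

Lemma fin_max {Th : Type} (g : Th -> R -> Prop)
  (Hex : forall th, exists r, g th r)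
  (Hun : forall th r r', g th r -> g th r' -> r = r') :
  forall (l : list Th) (a : Th), exists m, (exists th, In th (a :: l) /\ g th m) /\
    forall th r, In th (a :: l) -> g th r -> r <= m.
Proof.
  induction l as [|b l IH]; intros a.
  - destruct (Hex a) as [r Hr]. exists r. split.
    + exists a. split; [left; auto | auto].
    + intros th r' [<-|[]] Hr'. rewrite (Hun _ _ _ Hr' Hr). lra.
  - destruct (IH b) as [m [[th0 [Hin0 Hg0]] Hb]].
    destruct (Hex a) as [r Hr].
    destruct (Rle_dec r m).
    + exists m. split.
      * exists th0. split; [right; auto | auto].
      * intros th r' [<-|Hin] Hr'.
        -- rewrite (Hun _ _ _ Hr' Hr). lra.
        -- apply (Hb th r' Hin Hr').
    + exists r. split.
      * exists a. split; [left; auto | auto].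
      * intros th r' [<-|Hin] Hr'.
        -- rewrite (Hun _ _ _ Hr' Hr). lra.
        -- specialize (Hb th r' Hin Hr'). lra.
Qed.

Lemma ismax_unique (P : R -> Prop) v v' : IsMax P v -> IsMax P v' -> v = v'.
Proof. intros [H1 H2] [H3 H4]. specialize (H2 _ H3). specialize (H4 _ H1). lra. Qed.

Theorem theorem1 (Pol Th : Type) (U : Th -> Pol -> R)
  (* Theta^T is finite *)
  (Th_fin : exists l : list Th, forall th : Th, In th l)
  (* for each theta, max_{pi'} U^theta(pi') is attained *)
  (Hmax : forall th : Th, exists pm : Pol, forall p : Pol, U th p <= U th pm)
  (* MinimaxRegret is nonempty *)
  (Hne : exists pi0 : Pol, MinimaxRegret U pi0)
  (Fmin Fmax Smin Smax : R)
  (H1 : Fmin <= Fmax) (H2 : Fmax < Smin) (H3 : Smin <= Smax)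
  (H4 : Smax - Smin < Smin - Fmax) (H5 : Fmax - Fmin < Smin - Fmax)
  (Hrange : forall (th : Th) (p : Pol),
      (Fmin <= U th p <= Fmax) \/ (Smin <= U th p <= Smax))
  (Hstar : exists pstar : Pol, forall th : Th,
      (exists p : Pol, succeeds U Smin Smax p th) -> succeeds U Smin Smax pstar th) :
  forall pi : Pol, MinimaxRegret U pi ->
    forall th : Th, (exists p : Pol, succeeds U Smin Smax p th) -> succeeds U Smin Smax pi th.
Proof.
  intros pi [m [[_ Hm] Hmin]] th [p Hp].
  destruct Hstar as [ps Hps].
  destruct Th_fin as [l Hl].
  assert (Hex : forall t, exists r, RegretIs U ps t r).
  { intros t. destruct (Hmax t) as [pm Hpm]. exists (U t pm - U t ps).
    split. - exists pm; auto. - intros w [q ->]. specialize (Hpm q). lra. }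
  destruct (fin_max (RegretIs U ps) Hex
     (fun t r r' => ismax_unique _ r r') l th) as [ms [[t0 [_ Hg0]] Hb]].
  assert (Hms : MaxRegretIs U ps ms).
  { split.
    - exists t0, ms. auto.
    - intros w [t [r [Hr ->]]]. apply (Hb t r); auto. right; auto. }
  assert (Hle := Hmin ps ms Hms).
  assert (Hbnd : ms < Smin - Fmax).
  { destruct Hg0 as [[q Hq] _]. subst ms.
    destruct (Hrange t0 q) as [Aq|Aq]; destruct (Hrange t0 ps) as [Ap|Ap]; try lra.
    assert (succeeds U Smin Smax ps t0) by (apply Hps; exists q; exact Aq).
    unfold succeeds in *. lra. }
  unfold succeeds in *.
  destruct (Hrange th pi) as [Api|Api]; auto.
  exfalso.
  assert (Hex' : exists r, RegretIs U pi th r).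
  { destruct (Hmax th) as [pm Hpm]. exists (U th pm - U th pi).
    split. - exists pm; auto. - intros w [q ->]. specialize (Hpm q). lra. }
  destruct Hex' as [r Hr].
  assert (Hrm : r <= m) by (apply Hm; exists th, r; split; [exact Hr | reflexivity]).
  destruct Hr as [_ Hr]. assert (Hr2 := Hr (U th p - U th pi) (ex_intro _ p eq_refl)).
  lra.
Qed.
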